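(* Let $a<0$, $I=(a,+\infty)$, and let $V\in C^2(I)$ satisfy $\lim_{u\to a^+}V(u)=h^*>0$, $\lim_{u\to a^+}V'(u)=-\infty$, $V(0)=V'(0)=0$, $V''(0)>0$, $uV'(u)>0$ for all $u\in I\setminus\{0\}$, and $V(u)\to+\infty$ as $u\to+\infty$. Let $\beta>0$ be the point with $V(\beta)=h^*$. If $u/V'(u)\to+\infty$ as $u\to+\infty$ and $V''(u)>0$ for all $u>\beta$, then the extended period function satisfies $T(h)\to+\infty$ as $h\to+\infty$.
   Context: For $h\in(0,h^* )$ let $a<u^-(h)<0<u^+(h)$ be the two solutions of $V(u)=h$; for $h\ge h^*$ let $u^+(h)>0$ be the positive solution of $V(u)=h$. Define $T_p(h)=\sqrt2\int_{u^-(h)}^{u^+(h)}\frac{du}{\sqrt{h-V(u)}}$ for $0<h<h^*$ and $T_b(h)=\sqrt2\int_{a}^{u^+(h)}\frac{du}{\sqrt{h-V(u)}}$ for $h\ge h^*$. The extended period function (of the equation $\ddot u+V'(u)=0$) is $T(h)=T_p(h)$ for $0<h<h^*$ and $T(h)=T_b(h)$ for $h\ge h^*$. *)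

(* Defs.v *)
From Stdlib Require Import Reals.
From Coquelicot Require Import Coquelicot.
Open Scope R_scope.

Definition period_integrand (V : R -> R) (h : R) (u : R) : R :=
  sqrt 2 / sqrt (h - V u).

Definition T_p (V um up : R -> R) (h : R) : R :=
  RInt_gen (period_integrand V h) (at_right (um h)) (at_left (up h)).

Definition T_b (V up : R -> R) (a h : R) : R :=
  RInt_gen (period_integrand V h) (at_right a) (at_left (up h)).

Definition T_ext (V um up : R -> R) (a hstar h : R) : R :=
  if Rlt_dec h hstar then T_p V um up h else T_b V up a h.

(* Main.v *)
Require Import Defs.
From Stdlib Require Import Reals Lra.
From Coquelicot Require Import Coquelicot.
Open Scope R_scope.

Lemma h1 m d : 0 < m -> m <= d -> sqrt 2 / sqrt d <= sqrt 2 / sqrt m.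
Proof.
  intros Hm Hd. unfold Rdiv. apply Rmult_le_compat_l.
  - apply sqrt_pos.
  - apply Rinv_le_contravar. apply sqrt_lt_R0; lra. apply sqrt_le_1_alt; lra.
Qed.

Lemma h2 d L : 0 < d -> 0 < L -> L * L * d <= 2 -> L <= sqrt 2 / sqrt d.
Proof.
  intros Hd HL H.
  assert (Hs : 0 < sqrt d) by (apply sqrt_lt_R0; lra).
  assert (L * sqrt d <= sqrt 2).
  { rewrite <- (sqrt_square L) by lra. rewrite <- sqrt_mult by nra.
    apply sqrt_le_1_alt; lra. }
  apply Rmult_le_reg_r with (sqrt d); auto.
  unfold Rdiv. rewrite Rmult_assoc, Rinv_l by lra. lra.
Qed.

Lemma h3 c b u d : 0 < c -> u < b -> c * (b - u) <= d ->
  sqrt 2 / sqrt d <= (sqrt 2 / sqrt c) / sqrt (b - u).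
Proof.
  intros Hc Hu Hd.
  assert (0 < sqrt c) by (apply sqrt_lt_R0; lra).
  assert (0 < sqrt (b - u)) by (apply sqrt_lt_R0; lra).
  replace ((sqrt 2 / sqrt c) / sqrt (b - u)) with (sqrt 2 / sqrt (c * (b - u))).
  - apply h1; nra.
  - rewrite sqrt_mult by lra. field. lra.
Qed.

Lemma lemA (f : R -> R) (a b B : R) :
  a < b ->
  (forall x y, a < x -> x <= y -> y < b -> ex_RInt f x y) ->
  (forall u, a < u < b -> 0 <= f u) ->
  (forall x y, a < x -> x <= y -> y < b -> RInt f x y <= B) ->
  exists T, RInt_gen f (at_right a) (at_left b) = T /\
    forall x y, a < x -> x <= y -> y < b -> RInt f x y <= T.
Proof.
  intros Hab Hex Hpos Hbd.
  set (E := fun z => exists x y, a < x /\ x <= y /\ y < b /\ z = RInt f x y).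
  assert (HE1 : bound E).
  { exists B. intros z (x & y & H1 & H2 & H3 & ->). now apply Hbd. }
  assert (HE2 : exists z, E z).
  { exists (RInt f ((a+a+b)/3) ((a+a+b)/3)). exists ((a+a+b)/3), ((a+a+b)/3). repeat split; lra. }
  destruct (completeness E HE1 HE2) as [T [HT1 HT2]].
  assert (Hup : forall x y, a < x -> x <= y -> y < b -> RInt f x y <= T).
  { intros x y H1 H2 H3. apply HT1. exists x, y. repeat split; auto. }
  exists T; split; [|exact Hup].
  apply is_RInt_gen_unique.
  intros P [eps HP].
  assert (Hz : exists x0 y0, a < x0 /\ x0 <= y0 /\ y0 < b /\ T - eps < RInt f x0 y0).
  { destruct (Rlt_dec (T - eps) T) as [_|]; [|destruct eps; simpl in *; lra].
    apply Classical_Prop.NNPP. intros Hn.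
    assert (T <= T - eps); [|destruct eps; simpl in *; lra].
    apply HT2. intros z (x & y & H1 & H2 & H3 & ->).
    apply Rnot_lt_le. intros Hl. apply Hn. exists x, y. repeat split; auto. }
  destruct Hz as (x0 & y0 & H1 & H2 & H3 & H4).
  apply Filter_prod with (Q := fun x => a < x <= x0) (R := fun y => y0 <= y < b).
  - exists (mkposreal (x0 - a) ltac:(lra)). intros y Hy Hy'. simpl.
    unfold ball in Hy; simpl in Hy; unfold AbsRing_ball, abs, minus, plus, opp in Hy; simpl in Hy.
    apply Rabs_lt_between in Hy. lra.
  - exists (mkposreal (b - y0) ltac:(lra)). intros y Hy Hy'. simpl.
    unfold ball in Hy; simpl in Hy; unfold AbsRing_ball, abs, minus, plus, opp in Hy; simpl in Hy.
    apply Rabs_lt_between in Hy. lra.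
  - intros x y [Hx1 Hx2] [Hy1 Hy2]. simpl.
    exists (RInt f x y). split.
    + apply RInt_correct. apply Hex; lra.
    + apply HP.
      assert (Hc : RInt f x y = RInt f x x0 + RInt f x0 y0 + RInt f y0 y).
      { rewrite <- (RInt_Chasles f x x0 y) by (apply Hex; lra).
        rewrite <- (RInt_Chasles f x0 y0 y) by (apply Hex; lra).
        unfold plus; simpl. ring. }
      assert (0 <= RInt f x x0).
      { apply RInt_ge_0; [lra| apply Hex; lra|]. intros; apply Hpos; lra. }
      assert (0 <= RInt f y0 y).
      { apply RInt_ge_0; [lra| apply Hex; lra|]. intros; apply Hpos; lra. }
      assert (RInt f x y <= T) by (apply Hup; lra).
      unfold ball; simpl; unfold AbsRing_ball, abs, minus, plus, opp; simpl.
      apply Rabs_lt_between. destruct eps; simpl in *. lra.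
Qed.

Lemma lemB (f : R -> R) (a p q b M1 B2 : R) :
  a < p -> p < q -> q < b ->
  (forall x y, a < x -> x <= y -> y < b -> ex_RInt f x y) ->
  (forall u, a < u < b -> 0 <= f u) ->
  (forall u, a < u <= p -> f u <= M1) ->
  (forall y, q <= y < b -> RInt f q y <= B2) ->
  forall x y, a < x -> x <= y -> y < b -> RInt f x y <= M1 * (p - a) + RInt f p q + B2.
Proof.
  intros Hap Hpq Hqb Hex Hpos HM1 HB2 x y Hx Hxy Hy.
  set (x' := Rmin x p). set (y' := Rmax y q).
  assert (Hx'1 : a < x') by (unfold x', Rmin; destruct Rle_dec; lra).
  assert (Hx'2 : x' <= x /\ x' <= p) by (unfold x', Rmin; destruct Rle_dec; lra).
  assert (Hy'1 : y' < b) by (unfold y', Rmax; destruct Rle_dec; lra).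
  assert (Hy'2 : y <= y' /\ q <= y') by (unfold y', Rmax; destruct Rle_dec; lra).
  assert (E1 : RInt f x' y' = RInt f x' x + RInt f x y + RInt f y y').
  { rewrite <- (RInt_Chasles f x' x y') by (apply Hex; lra).
    rewrite <- (RInt_Chasles f x y y') by (apply Hex; lra).
    unfold plus; simpl. ring. }
  assert (E2 : RInt f x' y' = RInt f x' p + RInt f p q + RInt f q y').
  { rewrite <- (RInt_Chasles f x' p y') by (apply Hex; lra).
    rewrite <- (RInt_Chasles f p q y') by (apply Hex; lra).
    unfold plus; simpl. ring. }
  assert (0 <= RInt f x' x).
  { apply RInt_ge_0; [lra| apply Hex; lra|]. intros; apply Hpos; lra. }
  assert (0 <= RInt f y y').
  { apply RInt_ge_0; [lra| apply Hex; lra|]. intros; apply Hpos; lra. }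
  assert (RInt f x' p <= M1 * (p - a)).
  { apply Rle_trans with (RInt (fun _ => M1) x' p).
    - apply RInt_le; [lra| apply Hex; lra| apply ex_RInt_const|].
      intros; apply HM1; lra.
    - rewrite RInt_const. unfold scal; simpl; unfold mult; simpl.
      assert (0 <= M1).
      { apply Rle_trans with (f p); [apply Hpos; lra| apply HM1; lra]. }
      nra. }
  assert (RInt f q y' <= B2) by (apply HB2; lra).
  lra.
Qed.

Lemma lemC (f : R -> R) (q b K : R) :
  q < b -> 0 <= K ->
  (forall y, q <= y < b -> ex_RInt f q y) ->
  (forall u, q <= u < b -> f u <= K / sqrt (b - u)) ->
  forall y, q <= y < b -> RInt f q y <= 2 * K * sqrt (b - q).
Proof.
  intros Hqb HK Hex Hf y Hy.
  assert (Hd : forall x, q <= x <= y -> is_derive (fun u => - (2 * K) * sqrt (b - u)) x (K / sqrt (b - x))).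
  { intros x Hx. auto_derive. lra. replace (b + - x) with (b - x) by ring.
    assert (0 < sqrt (b - x)) by (apply sqrt_lt_R0; lra).
    field. lra. }
  assert (Hi : is_RInt (fun u => K / sqrt (b - u)) q y
     (minus (- (2 * K) * sqrt (b - y)) (- (2 * K) * sqrt (b - q)))).
  { apply (is_RInt_derive (fun u => - (2 * K) * sqrt (b - u))).
    - intros x Hx. rewrite Rmin_left in Hx by lra. rewrite Rmax_right in Hx by lra. now apply Hd.
    - intros x Hx. rewrite Rmin_left in Hx by lra. rewrite Rmax_right in Hx by lra.
      apply (ex_derive_continuous (fun u => K / sqrt (b - u))). auto_derive. split. lra.
      assert (0 < sqrt (b - x)) by (apply sqrt_lt_R0; lra). replace (b + - x) with (b - x) by ring. lra. }
  apply Rle_trans with (RInt (fun u => K / sqrt (b - u)) q y).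
  - destruct (Req_dec q y) as [<-|Hne].
    + rewrite !RInt_point. lra.
    + apply RInt_le; [lra| apply Hex; lra| eexists; exact Hi|].
      intros; apply Hf; lra.
  - rewrite (is_RInt_unique _ _ _ _ Hi). unfold minus, plus, opp; simpl.
    assert (0 <= sqrt (b - y)) by apply sqrt_pos. nra.
Qed.
Theorem lemma2p2
  (V : R -> R) (a hstar beta : R) (um up : R -> R)
  (Ha : a < 0)
  (* V is C^2 on I = (a, +oo) *)
  (HC2 : forall u, a < u ->
     ex_derive V u /\ ex_derive (Derive V) u /\
     continuous (Derive (Derive V)) u)
  (Hlim_a : filterlim V (at_right a) (locally hstar))
  (Hhstar : 0 < hstar)
  (Hdlim_a : filterlim (Derive V) (at_right a) (Rbar_locally m_infty))
  (HV0 : V 0 = 0) (HdV0 : Derive V 0 = 0) (Hd2V0 : 0 < Derive (Derive V) 0)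
  (Hsign : forall u, a < u -> u <> 0 -> 0 < u * Derive V u)
  (Hinf : filterlim V (Rbar_locally p_infty) (Rbar_locally p_infty))
  (* beta > 0 is the point with V(beta) = h* *)
  (Hbeta : 0 < beta) (HVbeta : V beta = hstar)
  (* u^-(h), u^+(h): the solutions of V(u) = h *)
  (Hum : forall h, 0 < h < hstar -> a < um h < 0 /\ V (um h) = h)
  (Hup : forall h, 0 < h -> 0 < up h /\ V (up h) = h)
  (* extra hypotheses *)
  (Hquot : filterlim (fun u => u / Derive V u)
             (Rbar_locally p_infty) (Rbar_locally p_infty))
  (Hconv : forall u, beta < u -> 0 < Derive (Derive V) u) :
  filterlim (T_ext V um up a hstar) (Rbar_locally p_infty) (Rbar_locally p_infty).
Proof.
  assert (Vc : forall u, a < u -> continuity_pt V u).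
  { intros u Hu. apply continuity_pt_filterlim. apply (ex_derive_continuous V). apply HC2; auto. }
  assert (Vd : forall u, a < u -> derivable_pt_lim V u (Derive V u)).
  { intros u Hu. apply is_derive_Reals. apply Derive_correct. apply HC2; auto. }
  assert (mvt : forall x y, a < x -> x < y -> exists xi, V y - V x = Derive V xi * (y - x) /\ x < xi < y).
  { intros x y Hx Hxy. apply MVT_cor2; auto. intros; apply Vd; lra. }
  assert (Vp : forall u, 0 < u -> 0 < Derive V u).
  { intros u Hu. assert (H := Hsign u ltac:(lra) ltac:(lra)). nra. }
  intros P [N HN].
  set (K0 := Rabs N + 1).
  assert (HK0 : 0 < K0) by (unfold K0; pose proof (Rabs_pos N); lra).
  assert (HNK : N < K0) by (unfold K0; pose proof (Rle_abs N); lra).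
  enough (Hen : exists H0, forall h, H0 < h -> K0 <= T_ext V um up a hstar h).
  { destruct Hen as [H0 HH]. exists H0. intros h Hh. apply HN. specialize (HH h Hh). lra. }
  assert (S1 : at_right a (fun u => V u < hstar + 1)).
  { apply (Hlim_a (fun y => y < hstar + 1)). exists (mkposreal 1 Rlt_0_1). intros y Hy.
    unfold ball in Hy; simpl in Hy; unfold AbsRing_ball, abs, minus, plus, opp in Hy; simpl in Hy.
    apply Rabs_lt_between in Hy. lra. }
  destruct S1 as [dl Hdl].
  set (p := a + Rmin dl (-a) / 2).
  assert (Hp : a < p < 0).
  { unfold p. pose proof (cond_pos dl). unfold Rmin; destruct Rle_dec; lra. }
  assert (Hp2 : forall u, a < u <= p -> V u < hstar + 1).
  { intros u Hu. apply Hdl; [|lra].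
    unfold ball; simpl; unfold AbsRing_ball, abs, minus, plus, opp; simpl.
    apply Rabs_lt_between. unfold p in Hu. pose proof (cond_pos dl).
    unfold Rmin in Hu; destruct Rle_dec; lra. }
  destruct (continuity_ab_maj V p 0 ltac:(lra)) as [Mx1 [HMx1 _]].
  { intros; apply Vc; lra. }
  set (M := 8 * (K0 * K0)).
  assert (HM : 0 < M) by (unfold M; nra).
  destruct (Hquot (fun y => M < y) (ex_intro _ M (fun x H => H))) as [U HU].
  set (U' := Rmax U 1).
  assert (HU' : U <= U' /\ 1 <= U') by (unfold U', Rmax; destruct Rle_dec; lra).
  destruct (continuity_ab_maj V 0 (2 * U') ltac:(lra)) as [Mx2 [HMx2 _]].
  { intros; apply Vc; lra. }
  exists (Rmax (hstar + 2) (Rmax (V Mx1 + 1) (V Mx2 + 1))).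
  intros h Hh.
  assert (Hh1 : hstar + 2 < h /\ V Mx1 + 1 < h /\ V Mx2 + 1 < h).
  { revert Hh. unfold Rmax; repeat destruct Rle_dec; intros; lra. }
  unfold T_ext. destruct (Rlt_dec h hstar) as [Hc|_]; [lra|].
  unfold T_b.
  destruct (Hup h ltac:(lra)) as [Hb0 HVb].
  set (b := up h) in *.
  assert (Hb2 : 2 * U' <= b).
  { destruct (Rle_dec (2 * U') b) as [?|Hn]; auto.
    assert (V b <= V Mx2) by (apply HMx2; lra). lra. }
  assert (R1 : forall u, a < u < b -> V u < h).
  { intros u Hu.
    destruct (Rle_dec u p). { assert (V u < hstar + 1) by (apply Hp2; lra). lra. }
    destruct (Rle_dec u 0). { assert (V u <= V Mx1) by (apply HMx1; lra). lra. }
    destruct (mvt u b ltac:(lra) ltac:(lra)) as [xi [E Hxi]].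
    assert (0 < Derive V xi) by (apply Vp; lra). nra. }
  assert (Hdb : 0 < Derive V b) by (apply Vp; lra).
  assert (Cb : continuous (Derive V) b) by (apply (ex_derive_continuous (Derive V)); apply HC2; lra).
  destruct (proj1 (filterlim_locally _ _) Cb (mkposreal (Derive V b / 2) ltac:(lra))) as [eta Heta].
  set (q := Rmax (b - eta / 2) (b / 2)).
  assert (Hq : b / 2 <= q /\ b - eta / 2 <= q /\ q < b).
  { unfold q, Rmax. pose proof (cond_pos eta). destruct Rle_dec; lra. }
  set (c := Derive V b / 2).
  assert (R3 : forall u, q <= u < b -> c * (b - u) <= h - V u).
  { intros u Hu.
    destruct (mvt u b ltac:(lra) ltac:(lra)) as [xi [E Hxi]].
    assert (Hx : ball b eta xi).
    { unfold ball; simpl; unfold AbsRing_ball, abs, minus, plus, opp; simpl.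
      apply Rabs_lt_between. pose proof (cond_pos eta). lra. }
    specialize (Heta xi Hx).
    unfold ball in Heta; simpl in Heta; unfold AbsRing_ball, abs, minus, plus, opp in Heta; simpl in Heta.
    apply Rabs_lt_between in Heta. unfold c. nra. }
  set (f := period_integrand V h).
  assert (fc : forall u, a < u < b -> continuous f u).
  { intros u Hu. unfold f, period_integrand, Rdiv.
    apply (continuous_mult (fun _ => sqrt 2) (fun u => / sqrt (h - V u))).
    - apply continuous_const.
    - apply continuous_Rinv_comp.
      + apply continuous_sqrt_comp. apply (continuous_minus (fun _ => h) V).
        apply continuous_const. apply (ex_derive_continuous V). apply HC2; lra.
      + assert (V u < h) by (apply R1; lra).
        assert (0 < sqrt (h - V u)) by (apply sqrt_lt_R0; lra). lra. }
  assert (fex : forall x y, a < x -> x <= y -> y < b -> ex_RInt f x y).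
  { intros x y Hx Hxy Hy. apply (@ex_RInt_continuous R_CompleteNormedModule). intros z Hz.
    rewrite Rmin_left in Hz by lra. rewrite Rmax_right in Hz by lra. apply fc; lra. }
  assert (fpos : forall u, a < u < b -> 0 <= f u).
  { intros u Hu. unfold f, period_integrand.
    assert (V u < h) by (apply R1; lra).
    apply Rlt_le, Rdiv_lt_0_compat; apply sqrt_lt_R0; lra. }
  assert (fM1 : forall u, a < u <= p -> f u <= sqrt 2 / sqrt (h - hstar - 1)).
  { intros u Hu. unfold f, period_integrand. apply h1. lra.
    assert (V u < hstar + 1) by (apply Hp2; lra). lra. }
  assert (HB2 : forall y, q <= y < b -> RInt f q y <= 2 * (sqrt 2 / sqrt c) * sqrt (b - q)).
  { apply lemC. lra.
    - apply Rlt_le, Rdiv_lt_0_compat; apply sqrt_lt_R0; unfold c; lra.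
    - intros y Hy. apply fex; lra.
    - intros u Hu. unfold f, period_integrand. apply h3. unfold c; lra. lra. apply R3; lra. }
  destruct (lemA f a b _ ltac:(lra) fex fpos
    (lemB f a p q b _ _ ltac:(lra) ltac:(lra) ltac:(lra) fex fpos fM1 HB2)) as [T [-> HT]].
  set (y := (U' + b) / 2).
  apply Rle_trans with (RInt f U' y); [| apply HT; unfold y; lra].
  apply Rle_trans with (RInt (fun _ => 4 * K0 / b) U' y).
  - rewrite RInt_const. unfold scal; simpl; unfold mult; simpl. unfold y.
    apply Rmult_le_reg_r with b; [lra|].
    field_simplify; [|lra]. nra.
  - apply RInt_le; [unfold y; lra | apply ex_RInt_const | apply fex; unfold y; lra |].
    intros u Hu. unfold f, period_integrand.
    assert (Hyb : y < b) by (unfold y; lra).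
    destruct (mvt u b ltac:(lra) ltac:(lra)) as [xi [E Hxi]].
    assert (Hdx : 0 < Derive V xi) by (apply Vp; lra).
    assert (HMx : M < xi / Derive V xi) by (apply HU; lra).
    assert (HMx' : M * Derive V xi < xi).
    { apply Rmult_lt_compat_r with (r := Derive V xi) in HMx; auto.
      unfold Rdiv in HMx. rewrite Rmult_assoc, Rinv_l in HMx by lra. lra. }
    set (d := h - V u).
    assert (Hd : d * M <= b * b).
    { unfold d. rewrite HVb in E. rewrite E. nra. }
    apply h2.
    + unfold d. rewrite HVb in E. rewrite E. nra.
    + apply Rdiv_lt_0_compat; lra.
    + replace (4 * K0 / b * (4 * K0 / b) * d) with (2 * (d * M) / (b * b))
        by (unfold M; field; lra).
      apply Rmult_le_reg_r with (b * b); [nra|].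
      unfold Rdiv. rewrite Rmult_assoc, Rinv_l by nra. lra.
Qed.
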